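(* Let $E$ be a fixed-point equation system whose formulas may contain $\min$, with interpretation $[\![E]\!]\colon\mathbb{E}(D)\to\mathbb{E}(D)$, and let $\eta'\in\mathbb{E}(D)$. Then $\eta'\le\mu[\![E]\!]$ if there exist: (a) a fixed-point equation system $E'$ (possibly with $\min$) over the same predicate variables with $[\![E']\!]\le[\![E]\!]$; (b) $u\in\mathbb{E}(D)$ with $[\![E'^{\max}]\!](u)\le u$; (c) a function $r\colon D\to[0,\infty)$ with $[\![\mathsf{D}E'^{\max}]\!](r)+u\le r$; and (d) $\eta'\le u$ with $\eta'\le[\![E']\!](\eta')$.
   Context: $\mathbb{E}(D)$ is the set of functions $D\to[0,\infty]$ with pointwise order and operations ($\infty+x=\infty$, $0\cdot\infty=0$, $r\cdot\infty=\infty$ for $r>0$); $\mu$ denotes least fixed point. Quantitative formulas over predicate variables $X_1,\dots,X_n$ ($X_j$ of type $D_j\to\Omega$): $F ::= X_j(\tilde e)\mid t\mid F_1+F_2\mid t\cdot F\mid \mathbf{if}\ \varphi\ \mathbf{then}\ F_1\ \mathbf{else}\ F_2\mid\min\{F_1,\dots,F_m\}$, with $\tilde e$ expressions, $t$ a $[0,\infty)$-valued term, $\varphi$ boolean; interpreted by $[\![X_j(e)]\!](\eta)(v)=\eta_j([\![e]\!](v))$, $[\![t]\!](\eta)(v)=[\![t]\!](v)$, pointwise sum, scalar product and minimum, and case distinction. A fixed-point equation system $E=\{X_i(\tilde x_i)=_\mu F_i\}_{i=1}^n$ has interpretation $[\![E]\!](\eta)=([\![F_1]\!](\eta),\dots,[\![F_n]\!](\eta))$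 on $\mathbb{E}(D)$, $D=\coprod_jD_j$. $E'^{\max}$ is obtained by replacing every $\min$ in $E'$ with $\max$ (pointwise maximum). $\mathsf{D}E$ applies to each right-hand side the syntactic transformation $\mathsf{D}(X_j(\tilde e))=X_j(\tilde e)$, $\mathsf{D}t=0$, $\mathsf{D}(F_1+F_2)=\mathsf{D}F_1+\mathsf{D}F_2$, $\mathsf{D}(t\cdot F)=t\cdot\mathsf{D}F$, $\mathsf{D}$ commuting with conditionals, $\min$ and $\max$. *)

(* Defs.v *)
From HB Require Import structures.
From mathcomp Require Import all_boot all_order all_algebra.
From mathcomp Require Import all_classical all_reals all_analysis.
Set Implicit Arguments. Unset Strict Implicit. Unset Printing Implicit Defensive.
Import Order.TTheory GRing.Theory Num.Theory.
Local Open Scope classical_set_scope.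
Local Open Scope ring_scope.

Section QForm.
Variables (R : realType) (n : nat) (Dom : 'I_n -> Type).

Definition Dsum := {j : 'I_n & Dom j}.

(* E(D): functions D -> [0,oo], represented as D -> \bar R with values >= 0 *)
Definition inED (V : Type) (f : V -> \bar R) : Prop := forall x, (0 <= f x)%E.

(* Quantitative formulas whose free (argument) variables range over V.
   QMax is only used for the transformed systems E'^max and D E'^max. *)
Inductive qform (V : Type) : Type :=
| QVar (j : 'I_n) (e : V -> Dom j)
| QConst (t : V -> R) (ht : forall v, 0 <= t v)
| QAdd (F1 F2 : qform V)
| QScale (t : V -> R) (ht : forall v, 0 <= t v) (F : qform V)
| QIte (phi : V -> bool) (F1 F2 : qform V)
| QMin (F : qform V) (Fs : seq (qform V))
| QMax (F : qform V) (Fs : seq (qform V)).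
Arguments QVar {V} j e.
Arguments QConst {V} t ht.
Arguments QAdd {V} F1 F2.
Arguments QScale {V} t ht F.
Arguments QIte {V} phi F1 F2.
Arguments QMin {V} F Fs.
Arguments QMax {V} F Fs.

Fixpoint qinterp (V : Type) (F : qform V) (eta : Dsum -> \bar R) (v : V)
  : \bar R :=
  match F with
  | QVar j e => eta (existT _ j (e v))
  | QConst t _ => (t v)%:E
  | QAdd F1 F2 => (qinterp F1 eta v + qinterp F2 eta v)%E
  | QScale t _ F => ((t v)%:E * qinterp F eta v)%E
  | QIte phi F1 F2 => if phi v then qinterp F1 eta v else qinterp F2 eta v
  | QMin F Fs => foldr (fun G acc => Order.min (qinterp G eta v) acc)
                       (qinterp F eta v) Fs
  | QMax F Fs => foldr (fun G acc => Order.max (qinterp G eta v) acc)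
                       (qinterp F eta v) Fs
  end.

(* formula without max (the grammar of the paper) *)
Fixpoint maxfree (V : Type) (F : qform V) : bool :=
  match F with
  | QVar _ _ | QConst _ _ => true
  | QAdd F1 F2 | QIte _ F1 F2 => maxfree F1 && maxfree F2
  | QScale _ _ F => maxfree F
  | QMin F Fs => maxfree F && all (@maxfree V) Fs
  | QMax _ _ => false
  end.

Fixpoint maxify (V : Type) (F : qform V) : qform V :=
  match F with
  | QVar j e => QVar j e
  | QConst t ht => QConst t ht
  | QAdd F1 F2 => QAdd (maxify F1) (maxify F2)
  | QScale t ht F => QScale t ht (maxify F)
  | QIte phi F1 F2 => QIte phi (maxify F1) (maxify F2)
  | QMin F Fs => QMax (maxify F) (map (@maxify V) Fs)
  | QMax F Fs => QMax (maxify F) (map (@maxify V) Fs)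
  end.

Lemma zero_nonneg (V : Type) : forall v : V, 0 <= (fun _ : V => (0 : R)) v.
Proof. by []. Qed.

Fixpoint Dtrans (V : Type) (F : qform V) : qform V :=
  match F with
  | QVar j e => QVar j e
  | QConst _ _ => QConst (fun _ => 0) (@zero_nonneg V)
  | QAdd F1 F2 => QAdd (Dtrans F1) (Dtrans F2)
  | QScale t ht F => QScale t ht (Dtrans F)
  | QIte phi F1 F2 => QIte phi (Dtrans F1) (Dtrans F2)
  | QMin F Fs => QMin (Dtrans F) (map (@Dtrans V) Fs)
  | QMax F Fs => QMax (Dtrans F) (map (@Dtrans V) Fs)
  end.

(* fixed-point equation systems  { X_i(x_i) =mu F_i }_{i < n} *)
Definition eqsys := forall i : 'I_n, qform (Dom i).

Definition sys_maxfree (E : eqsys) : Prop := forall i, maxfree (E i).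
Definition sys_max (E : eqsys) : eqsys := fun i => maxify (E i).
Definition sys_D (E : eqsys) : eqsys := fun i => Dtrans (E i).

Definition sys_interp (E : eqsys) (eta : Dsum -> \bar R) : Dsum -> \bar R :=
  fun d => qinterp (E (projT1 d)) eta (projT2 d).

Definition ple (f g : Dsum -> \bar R) : Prop := forall d, (f d <= g d)%E.

(* least fixed point of Phi on E(D) (Knaster-Tarski: pointwise infimum of
   all pre-fixed points in E(D)) *)
Definition lfp (Phi : (Dsum -> \bar R) -> (Dsum -> \bar R)) : Dsum -> \bar R :=
  fun d => ereal_inf [set eta d | eta in [set eta | inED eta /\ ple (Phi eta) eta]].

End QForm.

(* Main.v *)
Require Import Defs.
From Stdlib Require Import List.
From HB Require Import structures.
From mathcomp Require Import all_boot all_order all_algebra.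
From mathcomp Require Import all_classical all_reals all_analysis.
From mathcomp Require Import lra.
Import Order.TTheory GRing.Theory Num.Theory.
Local Open Scope ring_scope.

Section Helpers.
Variables (R : realType) (n : nat) (Dom : 'I_n -> Type) (V : Type).
Local Notation qf := (@qform R n Dom V).

Section Ind.
Variable P : qf -> Prop.
Hypotheses
  (HVar : forall j e, P (@QVar R n Dom V j e))
  (HConst : forall t ht, P (@QConst R n Dom V t ht))
  (HAdd : forall F1 F2, P F1 -> P F2 -> P (QAdd F1 F2))
  (HScale : forall t ht F, P F -> P (@QScale R n Dom V t ht F))
  (HIte : forall phi F1 F2, P F1 -> P F2 -> P (QIte phi F1 F2))
  (HMin : forall F Fs, P F -> (forall G, In G Fs -> P G) -> P (QMin F Fs))
  (HMax : forall F Fs, P F -> (forall G, In G Fs -> P G) -> P (QMax F Fs)).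

Fixpoint qind (F : qf) : P F :=
  match F with
  | QVar j e => @HVar j e
  | QConst t ht => @HConst t ht
  | QAdd F1 F2 => @HAdd F1 F2 (qind F1) (qind F2)
  | QScale t ht F => @HScale t ht F (qind F)
  | QIte phi F1 F2 => @HIte phi F1 F2 (qind F1) (qind F2)
  | QMin F Fs => @HMin F Fs (qind F)
      ((fix aux (s : seq qf) : forall G, In G s -> P G :=
         match s with
         | nil => fun G H => False_ind _ H
         | cons G' s' => fun G H =>
             match H with
             | or_introl e => eq_ind G' P (qind G') G e
             | or_intror H' => aux s' G H'
             end
         end) Fs)
  | QMax F Fs => @HMax F Fs (qind F)
      ((fix aux (s : seq qf) : forall G, In G s -> P G :=
         match s with
         | nil => fun G H => False_ind _ H
         | cons G' s' => fun G H =>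
             match H with
             | or_introl e => eq_ind G' P (qind G') G e
             | or_intror H' => aux s' G H'
             end
         end) Fs)
  end.
End Ind.
End Helpers.

Section Folds.
Variables (R : realType) (A B : Type).

Lemma In_map (f : A -> B) (s : seq A) x : In x s -> In (f x) (map f s).
Proof. elim: s => //= a s IH [->|H]; [by left|right; exact: IH]. Qed.

Lemma In_map_inv (f : A -> B) (s : seq A) y : In y (map f s) ->
  exists x, In x s /\ y = f x.
Proof.
elim: s => //= a s IH [<-|H]; first by exists a; split=> //; left.
by have [x [Hx ->]] := IH H; exists x; split=> //; right.
Qed.

Lemma fold_min_le (h : A -> \bar R) a0 s a : a = a0 \/ In a s ->
  (foldr (fun G acc => Order.min (h G) acc) (h a0) s <= h a)%E.
Proof.
elim: s => /= [[->|[]]//|b s IH H].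
case: H => [E|[E|H]].
- by rewrite ge_min IH ?orbT //; left.
- by rewrite E ge_min lexx.
- by rewrite ge_min IH ?orbT //; right.
Qed.

Lemma fold_max_ge (h : A -> \bar R) a0 s a : a = a0 \/ In a s ->
  (h a <= foldr (fun G acc => Order.max (h G) acc) (h a0) s)%E.
Proof.
elim: s => /= [[->|[]]//|b s IH H].
case: H => [E|[E|H]].
- by rewrite le_max IH ?orbT //; left.
- by rewrite E le_max lexx.
- by rewrite le_max IH ?orbT //; right.
Qed.

Lemma fold_min_att (h : A -> \bar R) a0 s : exists a, (a = a0 \/ In a s) /\
  foldr (fun G acc => Order.min (h G) acc) (h a0) s = h a.
Proof.
elim: s => /= [|b s [a [Ha ->]]]; first by exists a0; split=> //; left.
rewrite minEle; case: ifP => _.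
- by exists b; split=> //; right; left.
- exists a; split=> //; case: Ha => [->|H]; [by left|by right; right].
Qed.

Lemma fold_max_att (h : A -> \bar R) a0 s : exists a, (a = a0 \/ In a s) /\
  foldr (fun G acc => Order.max (h G) acc) (h a0) s = h a.
Proof.
elim: s => /= [|b s [a [Ha ->]]]; first by exists a0; split=> //; left.
rewrite maxEle; case: ifP => _.
- exists a; split=> //; case: Ha => [->|H]; [by left|by right; right].
- by exists b; split=> //; right; left.
Qed.
End Folds.
Arguments fold_min_le {R A} h a0 s a.
Arguments fold_max_ge {R A} h a0 s a.
Arguments fold_min_att {R A} h a0 s.
Arguments fold_max_att {R A} h a0 s.

Section Main.
Variables (R : realType) (n : nat) (Dom : 'I_n -> Type) (V : Type).
Local Notation qf := (@qform R n Dom V).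
Local Open Scope ereal_scope.

Lemma qi_ge0 (G : qf) f : inED f -> forall v, 0 <= qinterp G f v.
Proof.
move=> hf; elim/qind: G.
- by move=> j e v; exact: hf.
- by move=> t ht v /=; rewrite lee_fin.
- by move=> F1 F2 IH1 IH2 v /=; exact: adde_ge0.
- by move=> t ht F IH v /=; apply: mule_ge0 => //; rewrite lee_fin.
- by move=> phi F1 F2 IH1 IH2 v /=; case: ifP.
- move=> F Fs IH IHs v /=.
  have [a [Ha ->]] := fold_min_att (fun G => qinterp G f v) F Fs.
  by case: Ha => [->|Ha]; [exact: IH|exact: IHs].
- move=> F Fs IH IHs v /=.
  have [a [Ha ->]] := fold_max_att (fun G => qinterp G f v) F Fs.
  by case: Ha => [->|Ha]; [exact: IH|exact: IHs].
Qed.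

Lemma qi_mono (G : qf) f g : ple f g -> forall v, qinterp G f v <= qinterp G g v.
Proof.
move=> hfg; elim/qind: G.
- by move=> j e v; exact: hfg.
- by move=> t ht v /=.
- by move=> F1 F2 IH1 IH2 v /=; exact: leeD.
- by move=> t ht F IH v /=; apply: lee_wpmul2l => //; rewrite lee_fin.
- by move=> phi F1 F2 IH1 IH2 v /=; case: ifP.
- move=> F Fs IH IHs v /=.
  have [a [Ha ->]] := fold_min_att (fun G => qinterp G g v) F Fs.
  apply: le_trans (fold_min_le (fun G => qinterp G f v) F Fs a Ha) _.
  by case: Ha => [->|Ha]; [exact: IH|exact: IHs].
- move=> F Fs IH IHs v /=.
  have [a [Ha ->]] := fold_max_att (fun G => qinterp G f v) F Fs.
  apply: le_trans _ (fold_max_ge (fun G => qinterp G g v) F Fs a Ha).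
  by case: Ha => [->|Ha]; [exact: IH|exact: IHs].
Qed.

Lemma DT_le (G : qf) x v : qinterp (Dtrans G) x v <= qinterp G x v.
Proof.
elim/qind: G v.
- by move=> j e v.
- by move=> t ht v /=; rewrite lee_fin.
- by move=> F1 F2 IH1 IH2 v /=; exact: leeD.
- by move=> t ht F IH v /=; apply: lee_wpmul2l => //; rewrite lee_fin.
- by move=> phi F1 F2 IH1 IH2 v /=; case: ifP.
- move=> F Fs IH IHs v /=; rewrite foldr_map.
  have [a [Ha ->]] := fold_min_att (fun G => qinterp G x v) F Fs.
  apply: le_trans (fold_min_le (fun G => qinterp (Dtrans G) x v) F Fs a Ha) _.
  by case: Ha => [->|Ha]; [exact: IH|exact: IHs].
- move=> F Fs IH IHs v /=; rewrite foldr_map.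
  have [a [Ha ->]] := fold_max_att (fun G => qinterp (Dtrans G) x v) F Fs.
  apply: le_trans _ (fold_max_ge (fun G => qinterp G x v) F Fs a Ha).
  by case: Ha => [->|Ha]; [exact: IH|exact: IHs].
Qed.

Lemma DT_homog (G : qf) (lam : R) f : (0 <= lam)%R -> inED f -> forall v,
  qinterp (Dtrans G) (fun z => lam%:E * f z) v <= lam%:E * qinterp (Dtrans G) f v.
Proof.
move=> hl hf; have hl' : 0 <= lam%:E by rewrite lee_fin.
elim/qind: G.
- by move=> j e v.
- by move=> t ht v /=; rewrite mule0.
- move=> F1 F2 IH1 IH2 v /=; rewrite ge0_muleDr; try exact: qi_ge0.
  exact: leeD.
- move=> t ht F IH v /=; rewrite muleCA; apply: lee_wpmul2l; [by rewrite lee_fin|exact: IH].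
- by move=> phi F1 F2 IH1 IH2 v /=; case: ifP.
- move=> F Fs IH IHs v /=; rewrite !foldr_map.
  have [a [Ha ->]] := fold_min_att (fun G => qinterp (Dtrans G) f v) F Fs.
  apply: le_trans (fold_min_le (fun G => qinterp (Dtrans G) (fun z => lam%:E * f z) v) F Fs a Ha) _.
  by case: Ha => [->|Ha]; [exact: IH|exact: IHs].
- move=> F Fs IH IHs v /=; rewrite !foldr_map.
  have [a [Ha ->]] := fold_max_att (fun G => qinterp (Dtrans G) (fun z => lam%:E * f z) v) F Fs.
  apply: le_trans (_ : _ <= lam%:E * qinterp (Dtrans a) f v) _.
    by case: Ha => [->|Ha]; [exact: IH|exact: IHs].
  apply: lee_wpmul2l => //.
  exact: (fold_max_ge (fun G => qinterp (Dtrans G) f v) F Fs a Ha).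
Qed.

Lemma lipschitz (G : qf) x y d : inED y -> inED d -> (forall z, x z <= y z + d z) ->
  forall v, qinterp G x v <= qinterp G y v + qinterp (Dtrans (maxify G)) d v.
Proof.
move=> hy hd hxyd; elim/qind: G.
- by move=> j e v; exact: hxyd.
- by move=> t ht v /=; rewrite adde0.
- by move=> F1 F2 IH1 IH2 v /=; rewrite addeACA; exact: leeD.
- move=> t ht F IH v /=; rewrite -ge0_muleDr; try exact: qi_ge0.
  by apply: lee_wpmul2l => //; rewrite lee_fin.
- by move=> phi F1 F2 IH1 IH2 v /=; case: ifP.
- move=> F Fs IH IHs v /=; rewrite !foldr_map.
  have [a [Ha ->]] := fold_min_att (fun G => qinterp G y v) F Fs.
  apply: le_trans (fold_min_le (fun G => qinterp G x v) F Fs a Ha) _.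
  apply: le_trans (_ : _ <= qinterp a y v + qinterp (Dtrans (maxify a)) d v) _.
    by case: Ha => [->|Ha]; [exact: IH|exact: IHs].
  apply: leeD => //.
  exact: (fold_max_ge (fun G => qinterp (Dtrans (maxify G)) d v) F Fs a Ha).
- move=> F Fs IH IHs v /=; rewrite !foldr_map.
  have [a [Ha ->]] := fold_max_att (fun G => qinterp G x v) F Fs.
  apply: le_trans (_ : _ <= qinterp a y v + qinterp (Dtrans (maxify a)) d v) _.
    by case: Ha => [->|Ha]; [exact: IH|exact: IHs].
  apply: leeD.
    exact: (fold_max_ge (fun G => qinterp G y v) F Fs a Ha).
  exact: (fold_max_ge (fun G => qinterp (Dtrans (maxify G)) d v) F Fs a Ha).
Qed.
End Main.
Arguments qi_ge0 {R n Dom V} G f.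
Arguments qi_mono {R n Dom V} G f g.
Arguments DT_le {R n Dom V} G x v.
Arguments DT_homog {R n Dom V} G lam f.
Arguments lipschitz {R n Dom V} G x y d.

Lemma efin (R : realType) (x : \bar R) (a : R) : (0 <= x)%E -> (x <= a%:E)%E ->
  x = (fine x)%:E.
Proof. by case: x. Qed.
Arguments efin {R x a}.

Lemma real_step (R : realType) (c a A b r : R) : 0 < c -> a <= c^-1 * A -> a <= b ->
  A + b <= r -> a <= (c + 1)^-1 * r.
Proof.
move=> hc h1 h2 h3.
have hc1 : 0 < c + 1 by rewrite addr_gt0.
rewrite mulrC ler_pdivlMr //.
rewrite mulrC ler_pdivlMr // in h1.
nra.
Qed.

Lemma real_lim (R : realType) (a e r : R) : 0 <= r ->
  (forall k : nat, a <= e + ((k.+1)%:R)^-1 * r) -> a <= e.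
Proof.
move=> hr H.
have [r0|rpos] := eqVneq r 0.
  by have := H 0%N; rewrite r0 mulr0 addr0.
have rgt0 : 0 < r by rewrite lt_def rpos hr.
rewrite leNgt; apply/negP => hae.
have hd : 0 < (a - e) / r by rewrite divr_gt0 // subr_gt0.
have [k Hk] := ltr_add_invr hd.
rewrite add0r in Hk.
have := H k.
have : (k.+1)%:R^-1 * r < a - e.
  by rewrite -ltr_pdivlMr.
move=> h1 h2.
rewrite -(ltrD2l e) [e + (a - e)]addrC subrK in h1.
by rewrite ltNge h2 in h1.
Qed.

Theorem corollaryE5 (R : realType) (n : nat) (Dom : 'I_n -> Type)
  (E : eqsys R Dom) (eta' : Dsum Dom -> \bar R) :
  sys_maxfree E -> inED eta' ->
  (exists (E' : eqsys R Dom) (u : Dsum Dom -> \bar R) (r : Dsum Dom -> R),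
      [/\ sys_maxfree E',
          (* (a) [[E']] <= [[E]] on E(D) *)
          (forall eta, inED eta -> ple (sys_interp E' eta) (sys_interp E eta)),
          (* (b) u in E(D), [[E'^max]](u) <= u *)
          inED u /\ ple (sys_interp (sys_max E') u) u,
          (* (c) r : D -> [0,oo), [[D E'^max]](r) + u <= r *)
          (forall d, 0 <= r d) /\
            ple (fun d => sys_interp (sys_D (sys_max E')) (fun x => (r x)%:E) d + u d)%E
                (fun d => (r d)%:E) &
          (* (d) eta' <= u and eta' <= [[E']](eta') *)
          ple eta' u /\ ple eta' (sys_interp E' eta')]) ->
  ple eta' (lfp (sys_interp E)).
Proof.
move=> _ heta' [E' [u [r [_ hE'E [hu hub] [hr hc] [heu hee]]]]] d.
apply/ereal_infP => _ [eta [heta hpre] <-].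
have pre' : forall z, (sys_interp E' eta z <= eta z)%E.
  by move=> z; exact: le_trans (hE'E eta heta z) (hpre z).
set DR := fun z => sys_interp (sys_D (sys_max E')) (fun x => (r x)%:E) z.
have hrE : inED (fun x => (r x)%:E) by move=> x; rewrite lee_fin.
have DR0 : forall z, (0 <= DR z)%E.
  by move=> z; rewrite /DR /sys_interp; exact: qi_ge0.
have ur : forall z, (u z <= (r z)%:E)%E.
  by move=> z; exact: le_trans (lee_paddl (DR0 z) (lexx _)) (hc z).
have DRr : forall z, (DR z <= (r z)%:E)%E.
  by move=> z; exact: le_trans (lee_paddr (hu z) (lexx _)) (hc z).
have claim : forall k z, (eta' z <= eta z + (((k.+1)%:R)^-1 * r z)%:E)%E.
  elim=> [|k IH] z.
    rewrite mulr1n invr1 mul1r.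
    exact: le_trans (heu z) (le_trans (ur z) (lee_paddl (heta z) (lexx _))).
  pose c : R := (k.+1)%:R.
  have cgt0 : 0 < c by rewrite /c ltr0n.
  pose dd := fun x => Order.min ((c^-1 * r x)%:E) (u x).
  have hdd0 : inED dd.
    move=> x; rewrite /dd le_min hu andbT lee_fin.
    by rewrite mulr_ge0 // invr_ge0 ltW.
  have hxd : forall x, (eta' x <= eta x + dd x)%E.
    move=> x; rewrite /dd minEle; case: ifP => _; first exact: IH.
    exact: le_trans (heu x) (lee_paddl (heta x) (lexx _)).
  have L := lipschitz (E' (projT1 z)) eta' eta dd heta hdd0 hxd (projT2 z).
  set Dd := qinterp (Dtrans (maxify (E' (projT1 z)))) dd (projT2 z) in L.
  have h1 : (eta' z <= eta z + Dd)%E.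
    exact: le_trans (hee z) (le_trans L (leeD (pre' z) (lexx _))).
  have h2 : (Dd <= c^-1%:E * DR z)%E.
    have hl : 0 <= c^-1 by rewrite invr_ge0 ltW.
    apply: le_trans (DT_homog (maxify (E' (projT1 z))) c^-1 (fun x => (r x)%:E) hl hrE (projT2 z)).
    by apply: qi_mono => x; rewrite /dd -EFinM ge_min lexx.
  have h3 : (Dd <= u z)%E.
    apply: le_trans (qi_mono _ dd u _ (projT2 z)) _.
      by move=> x; rewrite /dd ge_min lexx orbT.
    exact: le_trans (DT_le _ _ _) (hub z).
  have Dd0 : (0 <= Dd)%E by exact: qi_ge0.
  apply: le_trans h1 _; apply: leeD => //.
  have hcz := hc z; rewrite -/(DR z) in hcz.
  have e1 := efin Dd0 (le_trans h3 (ur z)).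
  have e2 := efin (hu z) (ur z).
  have e3 := efin (DR0 z) (DRr z).
  rewrite e1 in h2 h3 *; rewrite e2 in h3 hcz; rewrite e3 in h2 hcz.
  rewrite -EFinM lee_fin in h2; rewrite lee_fin in h3; rewrite -EFinD lee_fin in hcz.
  rewrite lee_fin mulrSr.
  exact: real_step cgt0 h2 h3 hcz.
have heta'd := claim 0%N d.
case E0: (eta d) heta'd => [e| |] heta'd.
- have ha := efin (heta' d) heta'd.
  rewrite ha lee_fin; apply: (@real_lim R _ _ (r d) (hr d)) => k.
  by have := claim k d; rewrite E0 ha -EFinD lee_fin.
- exact: leey.
- by have := heta d; rewrite E0.
Qed.
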